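(* Let $\alpha,\beta$ be sets, $z\in\beta$, $\mathit{seq}:\beta\times\alpha\to\beta$ and $\oplus:\beta\times\beta\to\beta$. Let $\Gamma=\{\mathrm{foldl}(\mathit{seq},z,L) : L \text{ a finite list over }\alpha\}$. Assume $\oplus$ is associative on $\Gamma$ and $z$ is an identity of $\oplus$ on $\Gamma$. Then the following are equivalent: (1) for all finite lists $p_1,p_2$ over $\alpha$, $\mathrm{foldl}(\mathit{seq},z,p_1\mathbin{+\!\!+}p_2)=\mathrm{foldl}(\mathit{seq},z,p_1)\oplus\mathrm{foldl}(\mathit{seq},z,p_2)$; (2) for all $d\in\alpha$ and $e\in\Gamma$, $\mathit{seq}(e,d)=e\oplus\mathit{seq}(z,d)$.
   Context: Lists are finite; $\mathbin{+\!\!+}$ is list concatenation. For $f:B\times A\to B$, $b\in B$: $\mathrm{foldl}(f,b,[\,])=b$ and $\mathrm{foldl}(f,b,[x_1,\dots,x_n])=f(\cdots f(f(b,x_1),x_2)\cdots,x_n)$. *)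

(* Defs.v *)
From Stdlib Require Import List.
Import ListNotations.

Definition foldl {A B : Type} (f : B -> A -> B) (b : B) (L : list A) : B :=
  fold_left f L b.

Definition Gamma {A B : Type} (sq : B -> A -> B) (z : B) (e : B) : Prop :=
  exists L : list A, e = foldl sq z L.

(* Main.v *)
Require Import Defs.
From Stdlib Require Import List.
Import ListNotations.

Theorem lemma2 (A B : Type) (z : B) (sq : B -> A -> B) (op : B -> B -> B)
  (Hassoc : forall a b c, Gamma sq z a -> Gamma sq z b -> Gamma sq z c ->
              op (op a b) c = op a (op b c))
  (Hidl : forall a, Gamma sq z a -> op z a = a)
  (Hidr : forall a, Gamma sq z a -> op a z = a) :
  (forall p1 p2 : list A,
      foldl sq z (p1 ++ p2) = op (foldl sq z p1) (foldl sq z p2))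
  <->
  (forall (d : A) (e : B), Gamma sq z e -> sq e d = op e (sq z d)).
Proof.
  assert (G : forall L, Gamma sq z (foldl sq z L)) by (intro L; exists L; reflexivity).
  assert (F : forall L d, foldl sq z (L ++ [d]) = sq (foldl sq z L) d)
    by (intros; unfold foldl; rewrite fold_left_app; reflexivity).
  split.
  - intros H d e [L ->].
    rewrite <- F, H. reflexivity.
  - intros H p1 p2. induction p2 as [|d q IH] using rev_ind.
    + rewrite app_nil_r. symmetry. apply Hidr, G.
    + rewrite app_assoc, !F, H by apply G. rewrite IH.
      rewrite Hassoc by (try apply G; exact (G [d])).
      rewrite <- H by apply G. reflexivity.
Qed.
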